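(* Let $p \ge 2$, let $X \in L^p$ be a real valued random variable, and let $0 < r \le 2 \le s \le p$. Then $$\operatorname{Var}(X_+^{r/2})^{2/r} + \operatorname{Var}(X_-^{r/2})^{2/r} \le \operatorname{Var}(X) \le 2\left(\operatorname{Var}(X_+^{s/2})^{2/s} + \operatorname{Var}(X_-^{s/2})^{2/s}\right).$$
   Context: $X_+ = \max\{X,0\}$ and $X_- = -\min\{X,0\}$ are the positive and negative parts of $X$; $\operatorname{Var}(Y) = E(Y^2)-(EY)^2$. *)

(* Defs.v *)
From mathcomp Require Import all_boot all_order all_algebra.
From mathcomp Require Import all_classical all_reals all_analysis.
Set Implicit Arguments. Unset Strict Implicit. Unset Printing Implicit Defensive.
Import Order.TTheory GRing.Theory Num.Theory.
Local Open Scope ring_scope.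

Definition pos_part (T : Type) (R : realType) (X : T -> R) : T -> R :=
  fun t => Num.max (X t) 0.
Definition neg_part (T : Type) (R : realType) (X : T -> R) : T -> R :=
  fun t => - Num.min (X t) 0.

(* Main.v *)
Require Import Defs.
From mathcomp Require Import all_boot all_order all_algebra.
From mathcomp Require Import all_classical all_reals all_analysis.
From mathcomp Require Import measurable_realfun.
From mathcomp Require Import ring lra.
Import Order.TTheory GRing.Theory Num.Theory.
Local Open Scope ring_scope.

Section real_helpers.
Variable R : realType.
Implicit Types x y a b g s : R.

Lemma le_powR_1 x g : 0 <= x <= 1 -> g <= 1 -> x <= x `^ g.
Proof.
move=> /andP[x0 x1] g1; have [->|xn0] := eqVneq x 0; first exact: powR_ge0.
by apply: ger1_powR => //; rewrite lt_neqAle eq_sym xn0 x0.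
Qed.

Lemma powR_frac a s g : 0 <= a -> a <= s -> 0 < s -> g <= 1 ->
  s `^ g * (a / s) <= a `^ g.
Proof.
move=> a0 aS s0 g1.
have t0 : 0 <= a / s by rewrite divr_ge0 // ltW.
have t1 : a / s <= 1 by rewrite ler_pdivrMr // mul1r.
have -> : a `^ g = (s * (a / s)) `^ g by rewrite mulrC divfK // gt_eqF.
rewrite powRM // ?(ltW s0) // ler_wpM2l ?powR_ge0 //.
by apply: le_powR_1 => //; rewrite t0 t1.
Qed.

Lemma powR_subadd a b g : 0 <= a -> 0 <= b -> g <= 1 ->
  (a + b) `^ g <= a `^ g + b `^ g.
Proof.
move=> a0 b0 g1.
have [s0|sn0] := eqVneq (a + b) 0.
  move: (s0) => /eqP; rewrite paddr_eq0 // => /andP[/eqP -> /eqP ->].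
  by rewrite addr0 lerDl powR_ge0.
have sp : 0 < a + b by rewrite lt_neqAle eq_sym sn0 addr_ge0.
have ha : a <= a + b by rewrite lerDl.
have hb : b <= a + b by rewrite lerDr.
apply: (le_trans _ (lerD (powR_frac _ _ _ a0 ha sp g1) (powR_frac _ _ _ b0 hb sp g1))).
by rewrite -mulrDr -mulrDl divff // mulr1.
Qed.

Lemma powR_diff x y g : 0 <= x -> 0 <= y -> 0 < g -> g <= 1 ->
  `|x `^ g - y `^ g| <= `|x - y| `^ g.
Proof.
move=> x0 y0 g0 g1.
wlog yx : x y x0 y0 / y <= x.
  move=> H; have [/H|/ltW xy] := leP y x; first exact.
  by rewrite distrC [`|x - y|]distrC; apply: H.
have hm : y `^ g <= x `^ g by apply: ge0_ler_powR => //; exact: ltW.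
rewrite ger0_norm ?subr_ge0 // ger0_norm ?subr_ge0 //.
rewrite lerBlDl.
have := @powR_subadd (x - y) y g _ y0 g1; rewrite subr_ge0 subrK => /(_ yx).
by rewrite addrC.
Qed.

Lemma powR_le1add x a b : 0 <= x -> 0 <= a -> a <= b -> x `^ a <= 1 + x `^ b.
Proof.
move=> x0 a0 ab; have [x1|x1] := leP x 1.
  apply: (@le_trans _ _ 1); last by rewrite lerDl powR_ge0.
  have -> : (1:R) = 1 `^ a by rewrite powR1.
  by apply: ge0_ler_powR => //; rewrite nnegrE.
apply: (@le_trans _ _ (x `^ b)); last by rewrite lerDr ler01.
exact: ler_powR (ltW x1) _ _ ab.
Qed.
End real_helpers.

Section pn.
Variable R : realType.
Implicit Types x : R.
Lemma pos_ge0' x : 0 <= Num.max x 0.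
Proof. by rewrite le_max lexx orbT. Qed.
Lemma neg_ge0' x : 0 <= - Num.min x 0.
Proof. by rewrite oppr_ge0 ge_min lexx orbT. Qed.
Lemma pn_cases x : (Num.max x 0 = x /\ - Num.min x 0 = 0) \/
                   (Num.max x 0 = 0 /\ - Num.min x 0 = - x /\ x <= 0).
Proof.
rewrite /Order.max /Order.min; have [h|h] := ltP x 0.
  by right; rewrite ltW.
case: ltP => h2; first by left; rewrite oppr0.
have -> : x = 0 by apply/eqP; rewrite eq_le h h2.
by left; rewrite oppr0.
Qed.
Lemma pn_split x : x = Num.max x 0 - (- Num.min x 0).
Proof. by case: (pn_cases x) => [[-> ->]|[-> [-> _]]]; rewrite ?subr0 ?sub0r ?opprK. Qed.
Lemma pn_mul x : Num.max x 0 * (- Num.min x 0) = 0.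
Proof. by case: (pn_cases x) => [[-> ->]|[-> [-> _]]]; rewrite ?mulr0 ?mul0r. Qed.
Lemma pos_abs x : Num.max x 0 <= `|x|.
Proof. by case: (pn_cases x) => [[-> _]|[-> _]]; rewrite ?ler_norm. Qed.
Lemma neg_abs x : - Num.min x 0 <= `|x|.
Proof. by case: (pn_cases x) => [[_ ->]|[_ [-> _]]]; rewrite ?normrN ?ler_norm // -normrN ler_norm. Qed.
Lemma neg_maxE x : - Num.min x 0 = Num.max (0 - x) 0.
Proof. by rewrite oppr_min sub0r oppr0. Qed.
End pn.

Section prob.
Context d (T : measurableType d) (R : realType) (P : probability T R).
Local Open Scope ereal_scope.

Lemma L2dom (f h : T -> R) : measurable_fun setT f ->
  P.-integrable setT (EFin \o h) -> (forall t, `|f t| `^ 2 <= h t)%R ->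
  f \in Lfun P 2%:E.
Proof.
move=> mf ih fh.
rewrite inE; apply/andP; split; first by rewrite inE.
rewrite inE /= /finite_norm unlock /Lnorm.
apply: poweR_lty.
move/integrableP: ih => [mh hfin].
apply: le_lt_trans hfin.
apply: ge0_le_integral => //.
- by move=> x _; exact: poweR_ge0.
- apply/measurable_EFinP => /=.
  apply: (measurableT_comp (measurable_powR _)).
  exact: measurableT_comp.
- by apply: measurableT_comp => //.
- move=> x _ /=. rewrite ?abse_EFin ?poweR_EFin lee_fin [`|h x|%R]ger0_norm.
    exact: fh.
  by rewrite (le_trans _ (fh x)) // powR_ge0.
Qed.

Lemma var_pow_le (W : T -> R) (g : R) : (forall t, 0 <= W t)%R ->
  W \in Lfun P 2%:E -> (0 < g)%R -> (g <= 1)%R ->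
  'V_P[fun t => (W t `^ g)%R] <= 'V_P[W] `^ g.
Proof.
move=> W0 W2 g0 g1.
move: (W2); rewrite inE => /andP[/[!inE]/= mW _].
set U := fun t => (W t `^ g)%R.
have mU : measurable_fun setT U := measurableT_comp (measurable_powR _) mW.
have U2 : U \in Lfun P 2%:E.
  apply: (@L2dom _ (fun t => (1 + `|W t| `^ 2)%R)) => //.
    have -> : (EFin \o (fun t => (1 + `|W t| `^ 2)%R)) =
       ((EFin \o cst 1%R) \+ (fun t => ((`|W t| `^ 2)%R)%:E)) by apply/funext => t.
    apply: integrableD => //; first exact: finite_measure_integrable_cst.
    exact: Lfun_integrable (lee1n 2) W2.
  move=> t; rewrite /U ger0_norm ?powR_ge0 // -powRrM ger0_norm //.
  apply: powR_le1add => //; first by rewrite mulr_ge0 // ltW.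
  by rewrite -[leRHS]mul1r ler_wpM2r.
set m := fine 'E_P[W].
have m0 : (0 <= m)%R by apply: fine_ge0; apply: expectation_ge0.
set c := (m `^ g)%R.
have UC2 : (U \- cst c)%R \in Lfun P 2%:E.
  by apply: rpredB => //; [exact: lee1n | move=> ?; exact: Lfun_cst].
have stepA : 'V_P[U] <= 'E_P[(U \- cst c) ^+ 2]%R.
  rewrite -(@varianceB_cst_r _ _ _ P U c U2) varianceE //.
  rewrite lee_subel_addr; first by apply: lee_paddr => //; exact: sqre_ge0.
  by apply: expectation_fin_num; rewrite expr2; exact: Lfun2_mul_Lfun1.
have stepB : 'E_P[(U \- cst c) ^+ 2]%R <= 'E_P[fun t => (`|W t - m| `^ (g * 2))%R].
  have -> : ((U \- cst c) ^+ 2)%R = (fun t => (U t - c) ^+ 2)%R.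
    by apply/funext => t; rewrite /= !expr2.
  apply: expectation_le.
  - exact: (@measurable_funX _ _ _ _ (U \- cst c)%R 2
      (measurable_funB mU (measurable_cst c))).
  - apply: (measurableT_comp (measurable_powR _)).
    apply: measurableT_comp => //.
    exact: (measurable_funB mW (measurable_cst m)).
  - by move=> t; exact: sqr_ge0.
  - by move=> t; exact: powR_ge0.
  apply: aeW => t /=.
  rewrite powRrM powR_mulrn ?powR_ge0 // -real_normK ?num_real // !expr2.
  by apply: ler_pM => //; apply: powR_diff => //.
have stepC : 'E_P[fun t => (`|W t - m| `^ (g * 2))%R] <= 'V_P[W] `^ g.
  have VE : 'V_P[W] = \int[P]_t (((W t - m) ^+ 2)%R)%:E.
    rewrite /variance covariance.unlock -/m expectation.unlock.
    by apply: eq_integral => t _; rewrite /= expr2.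
  have mF : measurable_fun setT (fun t => (`|W t - m| `^ (g * 2))%R).
    apply: (measurableT_comp (measurable_powR _)).
    apply: measurableT_comp => //.
    exact: (measurable_funB mW (measurable_cst m)).
  rewrite VE expectation.unlock.
  have [->|g1'] := eqVneq g 1%R.
    rewrite poweRe1; last by apply: integral_ge0 => t _; rewrite lee_fin sqr_ge0.
    apply: ge0_le_integral => //.
    - apply/measurable_EFinP; apply: (measurableT_comp (measurable_powR _)).
      apply: measurableT_comp => //.
      exact: (measurable_funB mW (measurable_cst m)).
    - apply/measurable_EFinP.
      exact: (@measurable_funX _ _ _ _ (W \- cst m)%R 2
        (measurable_funB mW (measurable_cst m))).
    - move=> t _; rewrite lee_fin mul1r powR_mulrn // real_normK ?num_real //.
  have glt1 : (g < 1)%R by rewrite lt_neqAle g1' g1.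
  have p0 : (0 < g^-1)%R by rewrite invr_gt0.
  have q0 : (0 < (1 - g)^-1)%R by rewrite invr_gt0 subr_gt0.
  have pq : (g^-1^-1 + (1 - g)^-1^-1 = 1)%R by rewrite !invrK addrC subrK.
  have H := @hoelder _ _ _ P _ (cst 1%R) g^-1 (1 - g)^-1 mF (measurable_cst _)
    p0 q0 pq.
  have e1 : 'N[P]_1[EFin \o ((fun t => `|W t - m| `^ (g * 2)) \* cst 1)%R] =
      \int[P]_w (`|W w - m| `^ (g * 2))%:E.
    rewrite Lnorm1; apply: eq_integral => t _.
    by rewrite /= mulr1 ger0_norm // powR_ge0.
  have e3 : 'N[P]_((1 - g)^-1)%:E[EFin \o cst 1%R] = 1.
    have -> : EFin \o @cst T R 1%R = @cst T (\bar R) 1 by [].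
    rewrite Lnorm_cst1 [X in X `^ _](_ : _ = 1) ?poweR1r //.
    exact: probability_setT.
  have e2 : 'N[P]_(g^-1)%:E[EFin \o (fun t => `|W t - m| `^ (g * 2))%R] =
      (\int[P]_t ((W t - m) ^+ 2)%:E) `^ g.
    rewrite Lnorm.unlock /= invrK; congr (_ `^ _); apply: eq_integral => t _.
    rewrite /= ?abse_EFin ?poweR_EFin ger0_norm ?powR_ge0 // -powRrM.
    rewrite mulrAC divff ?gt_eqF // mul1r powR_mulrn // real_normK ?num_real //.
  by move: H; rewrite e1 e2 e3 mule1.
exact: le_trans stepA (le_trans stepB stepC).
Qed.
End prob.

Lemma pow_inv_le (R : realType) (x y : \bar R) (a : R) : (0 <= x)%E -> (0 <= y)%E ->
  (0 < a)%R -> (x <= y `^ a)%E -> (x `^ a^-1 <= y)%E.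
Proof.
move=> x0 y0 a0 h.
have ia : (0 <= a^-1)%R by rewrite invr_ge0 ltW.
apply: (le_trans (gt0_ler_poweR ia _ _ h)).
- by rewrite in_itv /= x0 leey.
- by rewrite in_itv /= poweR_ge0 leey.
by rewrite -poweRrM mulfV ?gt_eqF // poweRe1.
Qed.

Local Open Scope ereal_scope.

Theorem corollary3p3 (d : measure_display) (T : measurableType d) (R : realType)
    (P : probability T R) (p : R) (X : {RV P >-> R}) (r s : R) :
  (2 <= p)%R -> (X : T -> R) \in Lfun P p%:E ->
  (0 < r)%R -> (r <= 2)%R -> (2 <= s)%R -> (s <= p)%R ->
  'V_P[fun t => (pos_part X t `^ (r / 2))%R] `^ (2 / r)%R
    + 'V_P[fun t => (neg_part X t `^ (r / 2))%R] `^ (2 / r)%R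
    <= 'V_P[X]
  /\
  'V_P[X] <=
    2%:E * ('V_P[fun t => (pos_part X t `^ (s / 2))%R] `^ (2 / s)%R
            + 'V_P[fun t => (neg_part X t `^ (s / 2))%R] `^ (2 / s)%R).
Proof.
move=> p2 Xp r0 r2 s2 sp.
have p1 : (1 <= p)%R by rewrite (le_trans _ p2) // ler1n.
have s0 : (0 < s)%R by rewrite (lt_le_trans _ s2).
have Pfin : P [set: T]%classic \is a fin_num := fin_num_measure P _ measurableT.
have X2 : (X : T -> R) \in Lfun P 2%:E.
  apply: (@Lfun_subset _ _ _ P 2%:E p%:E _ _ Pfin _ _ Xp) => //; exact: lee1n.
move: (Xp); rewrite inE => /andP[/[!inE]/= mX _].
set Y := pos_part X.
set Z := neg_part X.
have Y0 t : (0 <= Y t)%R := @pos_ge0' R (X t).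
have Z0 t : (0 <= Z t)%R := @neg_ge0' R (X t).
have mY : measurable_fun setT Y by apply: measurable_maxr.
have mZ : measurable_fun setT Z.
  have -> : Z = ((cst 0%R \- X) \max cst 0%R)%R.
    by apply/funext => t; rewrite /Z /neg_part neg_maxE.
  by apply: measurable_maxr => //; apply: measurable_funB.
have intX2 : P.-integrable setT (EFin \o (fun t => `|X t| `^ 2)%R).
  exact: Lfun_integrable (lee1n 2) X2.
have Y2 : Y \in Lfun P 2%:E.
  apply: (@L2dom _ _ _ P _ _ mY intX2) => t; apply: ge0_ler_powR; rewrite ?nnegrE //.
  by rewrite ger0_norm // pos_abs.
have Z2 : Z \in Lfun P 2%:E.
  apply: (@L2dom _ _ _ P _ _ mZ intX2) => t; apply: ge0_ler_powR; rewrite ?nnegrE //.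
  by rewrite ger0_norm // neg_abs.
have hYZ : (X : T -> R) = (Y \- Z)%R.
  by apply/funext => t; rewrite /= {1}(@pn_split R (X t)).
have L1Y := Lfun_subset12 Pfin Y2.
have L1Z := Lfun_subset12 Pfin Z2.
have YZ0 : (Y \* Z)%R = cst 0%R by apply/funext => t; rewrite /= (@pn_mul R).
have cov : covariance P Y Z = - ('E_P[Y] * 'E_P[Z]).
  rewrite covarianceE //; last exact: Lfun2_mul_Lfun1.
  have -> : (Y * Z)%R = cst 0%R by [].
  by rewrite expectation_cst sub0e.
have VX : 'V_P[X] = 'V_P[Y] + 'V_P[Z] - 2%:E * covariance P Y Z.
  by rewrite hYZ varianceB.
have VD : 0 <= 'V_P[Y] + 'V_P[Z] + 2%:E * covariance P Y Z.
  by rewrite -varianceD // variance_ge0.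
have r20 : (0 < r / 2)%R by rewrite divr_gt0.
have r21 : (r / 2 <= 1)%R by rewrite ler_pdivrMr // mul1r.
have ir : ((r / 2)^-1 = 2 / r)%R by rewrite invf_div.
have lowY : 'V_P[fun t => (Y t `^ (r / 2))%R] `^ (2 / r)%R <= 'V_P[Y].
  rewrite -ir; apply: pow_inv_le => //; try exact: variance_ge0.
  exact: (@var_pow_le _ _ _ P Y _ Y0 Y2 r20 r21).
have lowZ : 'V_P[fun t => (Z t `^ (r / 2))%R] `^ (2 / r)%R <= 'V_P[Z].
  rewrite -ir; apply: pow_inv_le => //; try exact: variance_ge0.
  exact: (@var_pow_le _ _ _ P Z _ Z0 Z2 r20 r21).
have s20 : (0 < 2 / s)%R by rewrite divr_gt0.
have s21 : (2 / s <= 1)%R by rewrite ler_pdivrMr // mul1r.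
have ss : (s / 2 * (2 / s) = 1)%R by field; rewrite gt_eqF.
have s2' : (s / 2 * 2 = s)%R by rewrite divfK.
have intXp : P.-integrable setT (EFin \o (fun t => (1 + `|X t| `^ p)%R)).
  have -> : (EFin \o (fun t => (1 + `|X t| `^ p)%R)) =
     ((EFin \o cst 1%R) \+ (fun t => ((`|X t| `^ p)%R)%:E)) by apply/funext => t.
  apply: integrableD => //; first exact: finite_measure_integrable_cst.
  exact: Lfun_integrable p1 Xp.
have upY : 'V_P[Y] <= 'V_P[fun t => (Y t `^ (s / 2))%R] `^ (2 / s)%R.
  have mYs : measurable_fun setT (fun t => (Y t `^ (s / 2))%R).
    exact: measurableT_comp (measurable_powR _) mY.
  have Ys2 : (fun t => (Y t `^ (s / 2))%R) \in Lfun P 2%:E.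
    apply: (@L2dom _ _ _ P _ _ mYs intXp) => t.
    rewrite ger0_norm ?powR_ge0 // -powRrM s2'.
    apply: (le_trans (@powR_le1add R _ _ _ (Y0 t) (ltW s0) sp)).
    rewrite lerD2l; apply: ge0_ler_powR; rewrite ?nnegrE //; first exact: (le_trans ler01 p1).
    exact: pos_abs.
  have := @var_pow_le _ _ _ P _ _ (fun t => powR_ge0 _ _) Ys2 s20 s21.
  suff -> : (fun t => ((Y t `^ (s / 2)) `^ (2 / s))%R) = Y by [].
  by apply/funext => t; rewrite -powRrM ss powRr1.
have upZ : 'V_P[Z] <= 'V_P[fun t => (Z t `^ (s / 2))%R] `^ (2 / s)%R.
  have mZs : measurable_fun setT (fun t => (Z t `^ (s / 2))%R).
    exact: measurableT_comp (measurable_powR _) mZ.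
  have Zs2 : (fun t => (Z t `^ (s / 2))%R) \in Lfun P 2%:E.
    apply: (@L2dom _ _ _ P _ _ mZs intXp) => t.
    rewrite ger0_norm ?powR_ge0 // -powRrM s2'.
    apply: (le_trans (@powR_le1add R _ _ _ (Z0 t) (ltW s0) sp)).
    rewrite lerD2l; apply: ge0_ler_powR; rewrite ?nnegrE //; first exact: (le_trans ler01 p1).
    exact: neg_abs.
  have := @var_pow_le _ _ _ P _ _ (fun t => powR_ge0 _ _) Zs2 s20 s21.
  suff -> : (fun t => ((Z t `^ (s / 2)) `^ (2 / s))%R) = Z by [].
  by apply/funext => t; rewrite -powRrM ss powRr1.
have EY0 : 0 <= 'E_P[Y] by apply: expectation_ge0.
have EZ0 : 0 <= 'E_P[Z] by apply: expectation_ge0.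
split.
  apply: (le_trans (leeD lowY lowZ)).
  rewrite VX cov muleN oppeK.
  by apply: lee_paddr => //; apply: mule_ge0 => //; apply: mule_ge0.
apply: (le_trans _ (lee_wpmul2l _ (leeD upY upZ))); last by [].
have fY := variance_fin_num Y2.
have fZ := variance_fin_num Z2.
have fc : covariance P Y Z \is a fin_num.
  by apply: covariance_fin_num => //; exact: Lfun2_mul_Lfun1.
move: VD; rewrite VX -(fineK fY) -(fineK fZ) -(fineK fc).
rewrite -!EFinM -!EFinD !lee_fin => h.
lra.
Qed.
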